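(* Let $P \subset \mathbb{R}$ be a finite or countably infinite discrete set (containing none of its accumulation points). Let $\mathcal{H} = \ell^2(P)$ with orthonormal basis $(\psi_\lambda)_{\lambda\in P}$, and let $K$ be the self-adjoint (possibly unbounded) operator on $\mathcal{H}$ with $K\psi_\lambda = \lambda\psi_\lambda$ for all $\lambda\in P$ (defined on its maximal domain). Let $v\in\mathcal{H}$ be a cyclic vector for $K$, i.e. $v$ lies in $\bigcap_{n\ge 0}\operatorname{Dom}(K^n)$ and the span of $\{v, Kv, K^2v,\dots\}$ is dense in $\mathcal{H}$. On $\tilde{\mathcal H} = \mathcal{H}\oplus\mathbb{C}$ define the self-adjoint operators $$A(x\oplus\alpha) = (Kx + \alpha v)\oplus \langle v, x\rangle,\quad x\in\operatorname{Dom}(K),\ \alpha\in\mathbb{C},\qquad B(x\oplus\alpha) = 0\oplus\alpha,$$ i.e. $A = \begin{pmatrix} K & v\\ \langle v,\cdot\rangle & 0\end{pmatrix}$ and $B = \begin{pmatrix} 0&0\\0&1\end{pmatrix}$. Then $$\bigcup_{t \in \mathbb{R}} \sigma(A+tB) = \mathbb{R} \setminus P.$$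
   Context: $\sigma(T)$ denotes the spectrum of an operator $T$. The inner product $\langle\cdot,\cdot\rangle$ is linear in the second argument. *)

(* Defs.v *)
From HB Require Import structures.
From mathcomp Require Import all_boot all_order all_algebra.
From mathcomp Require Import all_classical all_reals all_analysis.
From mathcomp Require Import complex.
Set Implicit Arguments. Unset Strict Implicit. Unset Printing Implicit Defensive.
Import Order.TTheory GRing.Theory Num.Theory.
Local Open Scope classical_set_scope.
Local Open Scope ring_scope.

Section Defs.
Variable R : realType.
Local Notation C := R[i].

Definition normc2 (z : C) : R := (complex.Re z) ^+ 2 + (complex.Im z) ^+ 2.

(* elements of l^2(P) are represented as functions R -> C vanishing off P *)
Definition l2 (P : set R) (x : R -> C) : Prop :=
  (forall l, ~ P l -> x l = 0) /\
  (\esum_(l in P) (normc2 (x l))%:E < +oo)%E.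

Definition sqnorm (P : set R) (x : R -> C) : R :=
  fine (\esum_(l in P) (normc2 (x l))%:E).

Definition rsum (P : set R) (f : R -> R) : R :=
  fine (\esum_(l in P) (Num.max (f l) 0)%:E) -
  fine (\esum_(l in P) (Num.max (- f l) 0)%:E).

Definition csum (P : set R) (f : R -> C) : C :=
  Complex (rsum P (fun l => complex.Re (f l))) (rsum P (fun l => complex.Im (f l))).

(* inner product on l^2(P), linear in the second argument *)
Definition inner (P : set R) (v x : R -> C) : C :=
  csum P (fun l => conjc (v l) * x l).

Definition Kop (x : R -> C) : R -> C := fun l => (l%:C)%C * x l.

Definition domK (P : set R) (x : R -> C) : Prop := l2 P x /\ l2 P (Kop x).

Definition cyclic_vec (P : set R) (v : R -> C) : Prop :=
  (forall n : nat, l2 P (fun l => (l%:C)%C ^+ n * v l)) /\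
  (forall x, l2 P x -> forall eps : R, 0 < eps ->
     exists (N : nat) (c : nat -> C),
       sqnorm P (fun l => x l - \sum_(n < N) c n * ((l%:C)%C ^+ n * v l)) < eps).

Definition Ht := ((R -> C) * C)%type.
Definition Hspace (P : set R) (u : Ht) : Prop := l2 P u.1.
Definition hnorm2 (P : set R) (u : Ht) : R := sqnorm P u.1 + normc2 u.2.
Definition hadd (u w : Ht) : Ht := (fun l => u.1 l + w.1 l, u.2 + w.2).
Definition hsub (u w : Ht) : Ht := (fun l => u.1 l - w.1 l, u.2 - w.2).
Definition hscale (z : C) (u : Ht) : Ht := (fun l => z * u.1 l, z * u.2).

(* spectrum of an operator T with domain D in Htilde: z is in the resolvent
   set iff T - z : D -> Htilde is a bijection with bounded inverse *)
Definition spectrum (P : set R) (D : Ht -> Prop) (T : Ht -> Ht) : set C :=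
  [set z | ~ exists M : R, forall y, Hspace P y ->
      exists x, [/\ D x, hsub (T x) (hscale z x) = y,
                    hnorm2 P x <= M * hnorm2 P y &
                    forall x', D x' -> hsub (T x') (hscale z x') = y -> x' = x]].

Definition domA (P : set R) (u : Ht) : Prop := domK P u.1.
Definition Aop (P : set R) (v : R -> C) (u : Ht) : Ht :=
  (fun l => Kop u.1 l + u.2 * v l, inner P v u.1).
Definition Bop (u : Ht) : Ht := (fun _ => 0, u.2).
Definition ApB (P : set R) (v : R -> C) (t : R) (u : Ht) : Ht :=
  hadd (Aop P v u) (hscale (t%:C)%C (Bop u)).

Definition discrete_set (P : set R) : Prop :=
  forall l, P l -> exists2 e : R, 0 < e &
    forall m, P m -> `|m - l| < e -> m = l.

End Defs.

(* Main.v *)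
Require Import Defs.
From HB Require Import structures.
From mathcomp Require Import all_boot all_order all_algebra.
From mathcomp Require Import all_classical all_reals all_analysis.
From mathcomp Require Import complex.
From mathcomp Require Import ring lra.
Import Order.TTheory GRing.Theory Num.Theory.
Local Open Scope classical_set_scope.
Local Open Scope ring_scope.
Set Implicit Arguments. Unset Strict Implicit. Unset Printing Implicit Defensive.
Section L1.
Variable R : realType.
Variable P : set R.
Implicit Types (h g : R -> R) (c : R).

Definition ES h := (\esum_(l in P) (h l)%:E)%E.
Definition fin h := (ES h < +oo)%E.
Definition SS h := fine (ES h).
Definition nn h := forall l, P l -> 0 <= h l.

Lemma ES_ge0 h : nn h -> (0 <= ES h)%E.
Proof. by move=> H; apply: esum_ge0 => l Pl; rewrite lee_fin H. Qed.

Lemma ES_le h g : (forall l, P l -> h l <= g l) -> (ES h <= ES g)%E.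
Proof. by move=> H; apply: le_esum => l Pl; rewrite lee_fin H. Qed.

Lemma fin_le h g : (forall l, P l -> h l <= g l) -> fin g -> fin h.
Proof. by move=> H; rewrite /fin; apply: le_lt_trans; apply: ES_le. Qed.

Lemma ESE h : nn h -> fin h -> ES h = (SS h)%:E.
Proof.
move=> H F; rewrite /SS fineK //; rewrite ge0_fin_numE //; exact: ES_ge0.
Qed.

Lemma SS_ge0 h : nn h -> 0 <= SS h.
Proof. by move=> H; apply: fine_ge0; apply: ES_ge0. Qed.

Lemma SS_le h g : nn h -> (forall l, P l -> h l <= g l) -> fin g -> SS h <= SS g.
Proof.
move=> Hh Hhg Fg.
have Hg : nn g by move=> l Pl; apply: le_trans (Hh l Pl) (Hhg l Pl).
rewrite -lee_fin -(ESE Hh) ?(fin_le Hhg) // -(ESE Hg) //; exact: ES_le.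
Qed.

Lemma SS_eq h g : (forall l, P l -> h l = g l) -> SS h = SS g.
Proof. by move=> H; rewrite /SS /ES (eq_esum (b := fun l => (g l)%:E)) // => l /H ->. Qed.

Lemma fin_eq h g : (forall l, P l -> h l = g l) -> fin g -> fin h.
Proof. by move=> H; apply: fin_le => l /H ->. Qed.

Lemma ESD h g : nn h -> nn g -> ES (fun l => h l + g l) = (ES h + ES g)%E.
Proof.
move=> Hh Hg; rewrite /ES -esumD; last 2 first.
- by move=> l /Hh; rewrite lee_fin.
- by move=> l /Hg; rewrite lee_fin.
by apply: eq_esum => l _; rewrite EFinD.
Qed.

Lemma finD h g : nn h -> nn g -> fin h -> fin g -> fin (fun l => h l + g l).
Proof.
move=> Hh Hg Fh Fg; rewrite /fin ESD // (ESE Hh) // (ESE Hg) //.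
by rewrite -EFinD ltry.
Qed.

Lemma SSD h g : nn h -> nn g -> fin h -> fin g -> SS (fun l => h l + g l) = SS h + SS g.
Proof.
move=> Hh Hg Fh Fg; rewrite /SS ESD // (ESE Hh) // (ESE Hg) //.
Qed.

Lemma ESZ_le h c : 0 < c -> nn h -> (ES (fun l => (c * h l)%R) <= c%:E * ES h)%E.
Proof.
move=> c0 Hh; rewrite /ES; apply: ge_ereal_sup => /= _ [X [finX XP]] <-.
rewrite fsumEFin // -mulr_fsumr EFinM lee_pmul2l ?lte_fin //.
rewrite -fsumEFin //; apply: ereal_sup_ubound; exists X => //.
Qed.

Lemma ESZ h c : 0 <= c -> nn h -> ES (fun l => c * h l) = (c%:E * ES h)%E.
Proof.
move=> c0 Hh; have [->|cpos] := eqVneq c 0.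
  rewrite mul0e /ES esum1 // => l _; by rewrite mul0r.
have c1 : 0 < c by rewrite lt_def cpos c0.
apply/eqP; rewrite eq_le ESZ_le //=.
have Hch : nn (fun l => c * h l) by move=> l Pl; rewrite mulr_ge0 // Hh.
have ci : 0 < c^-1 by rewrite invr_gt0.
have := ESZ_le ci Hch.
rewrite (_ : ES (fun l => c^-1 * (c * h l)) = ES h); last first.
  by rewrite /ES; apply: eq_esum => l _; rewrite mulrA mulVf // mul1r.
move=> H; rewrite -(@lee_pmul2l _ (c^-1)%:E) ?lte_fin ?invr_gt0 //.
by rewrite muleA -EFinM mulVf // mul1e.
Qed.

Lemma finZ h c : 0 <= c -> nn h -> fin h -> fin (fun l => c * h l).
Proof. by move=> c0 Hh Fh; rewrite /fin ESZ // (ESE Hh) // -EFinM ltry. Qed.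

Lemma SSZ h c : 0 <= c -> nn h -> fin h -> SS (fun l => c * h l) = c * SS h.
Proof. by move=> c0 Hh Fh; rewrite /SS ESZ // (ESE Hh) // -EFinM. Qed.

Lemma ES0 : ES (fun _ => 0) = 0%E.
Proof. by rewrite /ES esum1. Qed.

Lemma SS0 : SS (fun _ => 0) = 0.
Proof. by rewrite /SS ES0. Qed.

Lemma fin0 : fin (fun _ => 0).
Proof. by rewrite /fin ES0. Qed.

Lemma ES1 h a : P a -> (forall l, l != a -> h l = 0) -> 0 <= h a -> ES h = (h a)%:E.
Proof.
move=> Pa H0 ha; rewrite /ES (esumID [set a]); last first.
  move=> l Pl; have [->|/H0 ->] := eqVneq l a; by rewrite lee_fin.
rewrite [X in (_ + X)%E]esum1; last first.
  by move=> l [_ /= la]; rewrite H0 //; apply/eqP.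
rewrite adde0 (_ : P `&` [set a] = [set a]); last first.
  by apply/seteqP; split => l /=; [case=> _ -> //|move=> ->; split].
by rewrite esum_set1 // lee_fin.
Qed.

Lemma SS1 h a : P a -> (forall l, l != a -> h l = 0) -> 0 <= h a -> SS h = h a.
Proof. by move=> Pa H0 ha; rewrite /SS (ES1 Pa H0 ha). Qed.

Lemma fin1 h a : P a -> (forall l, l != a -> h l = 0) -> 0 <= h a -> fin h.
Proof. by move=> Pa H0 ha; rewrite /fin (ES1 Pa H0 ha) ltry. Qed.

Lemma SS_ge1 h a : nn h -> fin h -> P a -> h a <= SS h.
Proof.
move=> Hh Fh Pa.
pose h1 := fun l => if l == a then h a else 0.
have -> : h a = SS h1.
  rewrite (@SS1 h1 a) //; rewrite /h1 ?eqxx ?Hh //.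
  by move=> l /negbTE ->.
apply: SS_le => //.
- by move=> l Pl; rewrite /h1; case: ifP => // _; rewrite Hh.
- by move=> l Pl; rewrite /h1; case: ifP => [/eqP -> //|_]; rewrite Hh.
Qed.

End L1.
Section L2.
Variable R : realType.
Variable P : set R.
Implicit Types (f g h : R -> R) (c : R).

Definition fp f := fun l => Num.max (f l) 0.
Definition fn f := fun l => Num.max (- f l) 0.
Definition sm f := fin P (fun l => `|f l|).

Lemma rsumE f : rsum P f = SS P (fp f) - SS P (fn f).
Proof. by []. Qed.

Lemma maxr0_l (x : R) : x <= 0 -> Num.max x 0 = 0.
Proof.
rewrite /Num.max => h; case: ltP => // h2; apply/eqP; rewrite eq_le h h2 //.
Qed.

Lemma maxr0_r (x : R) : 0 <= x -> Num.max x 0 = x.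
Proof.
rewrite /Num.max => h; case: ltP => // h2; apply/eqP; rewrite eq_le h /=.
by rewrite ltW.
Qed.

Lemma maxE (x : R) : Num.max x 0 - Num.max (- x) 0 = x.
Proof.
have [h|h] : x <= 0 \/ 0 <= x by case/orP: (le_total x 0); auto.
  by rewrite (maxr0_l h) maxr0_r ?oppr_ge0 // sub0r opprK.
by rewrite (maxr0_r h) maxr0_l ?subr0 // oppr_le0.
Qed.

Lemma max_ge0 (x : R) : 0 <= Num.max x 0.
Proof.
have [h|h] : x <= 0 \/ 0 <= x by case/orP: (le_total x 0); auto.
  by rewrite maxr0_l.
by rewrite maxr0_r.
Qed.

Lemma max_le_abs (x : R) : Num.max x 0 <= `|x|.
Proof.
have [h|h] : x <= 0 \/ 0 <= x by case/orP: (le_total x 0); auto.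
  by rewrite maxr0_l.
by rewrite maxr0_r ?ler_norm.
Qed.

Lemma nn_fp f : nn P (fp f). Proof. by move=> l _; exact: max_ge0. Qed.
Lemma nn_fn f : nn P (fn f). Proof. by move=> l _; exact: max_ge0. Qed.
Lemma nn_abs f : nn P (fun l => `|f l|). Proof. by move=> l _; exact: normr_ge0. Qed.

Lemma fin_fp f : sm f -> fin P (fp f).
Proof. by move=> F; apply: fin_le F => l _; exact: max_le_abs. Qed.
Lemma fin_fn f : sm f -> fin P (fn f).
Proof. by move=> F; apply: fin_le F => l _; rewrite /fn -normrN; exact: max_le_abs. Qed.

Lemma sm_le f h : (forall l, P l -> `|f l| <= h l) -> fin P h -> sm f.
Proof. by move=> H F; apply: fin_le F. Qed.

Lemma smD f g : sm f -> sm g -> sm (fun l => f l + g l).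
Proof.
move=> F G; apply: (sm_le (h := fun l => `|f l| + `|g l|)).
  by move=> l _; exact: ler_normD.
by apply: finD => //; exact: nn_abs.
Qed.

Lemma smZ f c : sm f -> sm (fun l => c * f l).
Proof.
move=> F; apply: (sm_le (h := fun l => `|c| * `|f l|)).
  by move=> l _; rewrite normrM.
by apply: finZ => //; exact: nn_abs.
Qed.

Lemma smN f : sm f -> sm (fun l => - f l).
Proof. by move=> F; apply: (sm_le (h := fun l => `|f l|)) => // l _; rewrite normrN. Qed.

Lemma smB f g : sm f -> sm g -> sm (fun l => f l - g l).
Proof. by move=> F G; apply: smD => //; exact: smN. Qed.

Lemma sm_eq f g : (forall l, P l -> f l = g l) -> sm g -> sm f.
Proof. by move=> H; apply: fin_le => l /H ->. Qed.

Lemma rsum_eq f g : (forall l, P l -> f l = g l) -> rsum P f = rsum P g.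
Proof.
move=> H; rewrite !rsumE (@SS_eq _ _ (fp f) (fp g)) ?(@SS_eq _ _ (fn f) (fn g)) //.
- by move=> l /H; rewrite /fn => ->.
- by move=> l /H; rewrite /fp => ->.
Qed.

Lemma rsumD f g : sm f -> sm g -> rsum P (fun l => f l + g l) = rsum P f + rsum P g.
Proof.
move=> F G; have FG := smD F G.
rewrite !rsumE.
set a := fp (fun l => f l + g l); set b := fn (fun l => f l + g l).
have E : SS P (fun l => (a l + fn f l) + fn g l) = SS P (fun l => (b l + fp f l) + fp g l).
  apply: SS_eq => l _; rewrite /a /b /fp /fn.
  have := maxE (f l + g l); have := maxE (f l); have := maxE (g l); lra.
have na := nn_fp (fun l => f l + g l); have nb := nn_fn (fun l => f l + g l).
have fa := fin_fp FG; have fb := fin_fn FG.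
move: E; rewrite !SSD //; try (by apply: nn_fp); try (by apply: nn_fn);
  try (by apply: fin_fp); try (by apply: fin_fn).
- rewrite -/a -/b; lra.
- by move=> l Pl; apply: addr_ge0; [apply: nb|apply: nn_fp].
- by apply: finD => //; [apply: nn_fp| apply: fin_fp].
- by move=> l Pl; apply: addr_ge0; [apply: na|apply: nn_fn].
- by apply: finD => //; [apply: nn_fn| apply: fin_fn].
Qed.

Lemma rsumN f : rsum P (fun l => - f l) = - rsum P f.
Proof.
rewrite !rsumE (@SS_eq _ _ (fp (fun l => - f l)) (fn f)) //.
rewrite (@SS_eq _ _ (fn (fun l => - f l)) (fp f)); first lra.
by move=> l _; rewrite /fn /fp opprK.
Qed.

Lemma rsumZp f c : 0 <= c -> sm f -> rsum P (fun l => c * f l) = c * rsum P f.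
Proof.
move=> c0 F; rewrite !rsumE.
rewrite (@SS_eq _ _ (fp (fun l => c * f l)) (fun l => c * fp f l)); last first.
  move=> l _; rewrite /fp; have [h|h] : f l <= 0 \/ 0 <= f l by case/orP: (le_total (f l) 0); auto.
    by rewrite (maxr0_l h) maxr0_l ?mulr0 // mulr_ge0_le0.
  by rewrite (maxr0_r h) maxr0_r // mulr_ge0.
rewrite (@SS_eq _ _ (fn (fun l => c * f l)) (fun l => c * fn f l)); last first.
  move=> l _; rewrite /fn; have [h|h] : f l <= 0 \/ 0 <= f l by case/orP: (le_total (f l) 0); auto.
    rewrite (@maxr0_r (- f l)) ?oppr_ge0 // (@maxr0_r (- (c * f l))) ?mulrN //.
    by rewrite oppr_ge0 mulr_ge0_le0.
  rewrite (@maxr0_l (- f l)) ?oppr_le0 // (@maxr0_l (- (c * f l))) ?mulr0 //.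
  by rewrite oppr_le0 mulr_ge0.
rewrite !SSZ //; [|exact: nn_fn|exact: fin_fn|exact: nn_fp|exact: fin_fp].
by rewrite mulrBr.
Qed.

Lemma rsumZ f c : sm f -> rsum P (fun l => c * f l) = c * rsum P f.
Proof.
move=> F; have [h|h] := leP 0 c; first exact: rsumZp.
rewrite (@rsum_eq _ (fun l => - ((- c) * f l))); last by move=> l _; rewrite mulNr opprK.
by rewrite rsumN rsumZp ?oppr_ge0 ?ltW // mulNr opprK.
Qed.

Lemma rsumB f g : sm f -> sm g -> rsum P (fun l => f l - g l) = rsum P f - rsum P g.
Proof. by move=> F G; rewrite rsumD ?rsumN //; exact: smN. Qed.

Lemma rsum_nn f : nn P f -> fin P f -> rsum P f = SS P f.
Proof.
move=> H F; rewrite rsumE (@SS_eq _ _ (fp f) f); last first.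
  by move=> l /H h; rewrite /fp maxr0_r.
rewrite (@SS_eq _ _ (fn f) (fun _ => 0)) ?SS0 ?subr0 //.
by move=> l /H h; rewrite /fn maxr0_l // oppr_le0.
Qed.

Lemma sm_nn f : nn P f -> fin P f -> sm f.
Proof. by move=> H F; apply: (fin_eq (g := f)) F => l /H h; rewrite ger0_norm. Qed.

Lemma rsum_le f g : sm f -> sm g -> (forall l, P l -> f l <= g l) -> rsum P f <= rsum P g.
Proof.
move=> F G H.
have : 0 <= rsum P (fun l => g l - f l).
  rewrite rsum_nn; first apply: SS_ge0.
  - by move=> l /H; rewrite subr_ge0.
  - by move=> l /H; rewrite subr_ge0.
  apply: (fin_le (g := fun l => `|g l - f l|)); last exact: smB.
  by move=> l _; exact: ler_norm.
by rewrite rsumB // subr_ge0.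
Qed.

Lemma rsum_ge0 f : nn P f -> fin P f -> 0 <= rsum P f.
Proof. by move=> H F; rewrite rsum_nn //; exact: SS_ge0. Qed.

Lemma rsum1 f a : P a -> (forall l, l != a -> f l = 0) -> rsum P f = f a.
Proof.
move=> Pa H; rewrite rsumE (@SS1 _ _ (fp f) a) ?(@SS1 _ _ (fn f) a) ?maxE //.
- by move=> l /H; rewrite /fn => ->; rewrite oppr0 maxr0_l.
- exact: max_ge0.
- by move=> l /H; rewrite /fp => ->; rewrite maxr0_l.
- exact: max_ge0.
Qed.

Lemma rsum0 : rsum P (fun _ => 0) = 0.
Proof. by rewrite rsum_nn ?SS0 //; exact: fin0. Qed.

Lemma sm1 f a : P a -> (forall l, l != a -> f l = 0) -> sm f.
Proof.
move=> Pa H; apply: (fin1 (a := a)) => //.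
by move=> l /H ->; rewrite normr0.
Qed.

End L2.
Section L3.
Variable R : realType.
Local Notation C := R[i].
Local Notation cRe := (@complex.Re R).
Local Notation cIm := (@complex.Im R).
Implicit Types (a b z : C).

Lemma ReD a b : cRe (a + b) = cRe a + cRe b. Proof. by case: a; case: b. Qed.
Lemma ImD a b : cIm (a + b) = cIm a + cIm b. Proof. by case: a; case: b. Qed.
Lemma ReN a : cRe (- a) = - cRe a. Proof. by case: a. Qed.
Lemma ImN a : cIm (- a) = - cIm a. Proof. by case: a. Qed.
Lemma ReB a b : cRe (a - b) = cRe a - cRe b. Proof. by case: a; case: b. Qed.
Lemma ImB a b : cIm (a - b) = cIm a - cIm b. Proof. by case: a; case: b. Qed.
Lemma ReM a b : cRe (a * b) = cRe a * cRe b - cIm a * cIm b.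
Proof. by case: a => ? ?; case: b => ? ?. Qed.
Lemma ImM a b : cIm (a * b) = cRe a * cIm b + cIm a * cRe b.
Proof. by case: a => ? ?; case: b => ? ?. Qed.
Lemma ReJ a : cRe (conjc a) = cRe a. Proof. by case: a. Qed.
Lemma ImJ a : cIm (conjc a) = - cIm a. Proof. by case: a. Qed.
Lemma ReR (r : R) : cRe (r%:C)%C = r. Proof. by []. Qed.
Lemma ImR (r : R) : cIm (r%:C)%C = 0. Proof. by []. Qed.
Lemma Re0 : cRe 0 = 0. Proof. by []. Qed.
Lemma Im0 : cIm 0 = 0. Proof. by []. Qed.
Lemma Re1 : cRe 1 = 1. Proof. by []. Qed.
Lemma Im1 : cIm 1 = 0. Proof. by []. Qed.
Lemma ReV a : cRe (a^-1) = cRe a / (cRe a ^+ 2 + cIm a ^+ 2).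
Proof. by case: a. Qed.
Lemma ImV a : cIm (a^-1) = - cIm a / (cRe a ^+ 2 + cIm a ^+ 2).
Proof. by case: a => ? ? /=; rewrite mulNr. Qed.
Lemma cE a b : cRe a = cRe b -> cIm a = cIm b -> a = b.
Proof. by case: a => ? ?; case: b => ? ? /= -> ->. Qed.

Definition cRw := (ReD, ImD, ReN, ImN, ReM, ImM, ReJ, ImJ, ReR, ImR, Re0, Im0, Re1, Im1).

Lemma nc2E a : normc2 a = cRe a ^+ 2 + cIm a ^+ 2. Proof. by []. Qed.

Lemma nc2_ge0 a : 0 <= normc2 a.
Proof. by rewrite nc2E addr_ge0 // sqr_ge0. Qed.

Lemma nc2M a b : normc2 (a * b) = normc2 a * normc2 b.
Proof. rewrite !nc2E !cRw; ring. Qed.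

Lemma nc2J a : normc2 (conjc a) = normc2 a.
Proof. rewrite !nc2E !cRw; ring. Qed.

Lemma nc2N a : normc2 (- a) = normc2 a.
Proof. rewrite !nc2E !cRw; ring. Qed.

Lemma nc2R (r : R) : normc2 (r%:C)%C = r ^+ 2.
Proof. rewrite !nc2E !cRw; ring. Qed.

Lemma nc2D a b : normc2 (a + b) <= 2 * (normc2 a + normc2 b).
Proof.
rewrite !nc2E !cRw.
have := sqr_ge0 (cRe a - cRe b); have := sqr_ge0 (cIm a - cIm b); nra.
Qed.

Lemma nc2B a b : normc2 (a - b) <= 2 * (normc2 a + normc2 b).
Proof. by rewrite -(nc2N b); exact: nc2D. Qed.

Lemma nc2_eq0 a : normc2 a = 0 -> a = 0.
Proof.
rewrite nc2E => h; have h1 := sqr_ge0 (cRe a); have h2 := sqr_ge0 (cIm a).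
have e1 : cRe a ^+ 2 = 0 by lra.
have e2 : cIm a ^+ 2 = 0 by lra.
by apply: cE; apply/eqP; rewrite -sqrf_eq0 ?e1 ?e2.
Qed.

Lemma nc2V a : normc2 (a^-1) = (normc2 a)^-1.
Proof.
have [->|a0] := eqVneq a 0; first by rewrite invr0 !nc2E /= expr0n /= addr0 invr0.
have n0 : normc2 a != 0 by apply: contra a0 => /eqP /nc2_eq0 ->.
rewrite nc2E ReV ImV -nc2E; move: n0; rewrite nc2E => n0.
field => //.
Qed.

Lemma JM a : conjc a * a = (normc2 a)%:C%C.
Proof. by apply: cE; rewrite !cRw ?nc2E; ring. Qed.

Lemma Re_le a b (e : R) : 0 < e -> cRe (a * b) <= (e * normc2 a + normc2 b / e) / 2.
Proof.
move=> e0; rewrite !nc2E !cRw.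
have e1 : e != 0 by rewrite gt_eqF.
have ie : 0 <= e^-1 by rewrite invr_ge0 ltW.
have h1 := mulr_ge0 (sqr_ge0 (e * cRe a - cRe b)) ie.
have h2 := mulr_ge0 (sqr_ge0 (e * cIm a + cIm b)) ie.
have E1 : (e * cRe a - cRe b) ^+ 2 * e^-1 = e * cRe a ^+ 2 - 2 * cRe a * cRe b + cRe b ^+ 2 / e by field.
have E2 : (e * cIm a + cIm b) ^+ 2 * e^-1 = e * cIm a ^+ 2 + 2 * cIm a * cIm b + cIm b ^+ 2 / e by field.
have E3 : (e * (cRe a ^+ 2 + cIm a ^+ 2) + (cRe b ^+ 2 + cIm b ^+ 2) / e) / 2 =
  (e * cRe a ^+ 2 + cRe b ^+ 2 / e + (e * cIm a ^+ 2 + cIm b ^+ 2 / e)) / 2 by field.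
rewrite E3; rewrite E1 in h1; rewrite E2 in h2; lra.
Qed.

Lemma absRe_le a b : `|cRe (a * b)| <= (normc2 a + normc2 b) / 2.
Proof.
rewrite ler_norml; apply/andP; split.
- have := Re_le (- a) b ltr01; rewrite nc2N mulNr !cRw; lra.
- by have := Re_le a b ltr01; rewrite divr1 mul1r.
Qed.

Lemma Im_Re z : cIm z = cRe (z * (- 'i%C)).
Proof. case: z => x y /=; ring. Qed.

Lemma nc2i : normc2 (- 'i%C : C) = 1.
Proof. by rewrite nc2E /= oppr0 expr0n /= add0r sqrrN expr1n. Qed.

Lemma absIm_le a b : `|cIm (a * b)| <= (normc2 a + normc2 b) / 2.
Proof.
rewrite Im_Re (_ : a * b * - 'i%C = (- 'i%C * a) * b); last by ring.
by have := absRe_le (- 'i%C * a) b; rewrite nc2M nc2i mul1r.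
Qed.

End L3.
Section L4.
Variable R : realType.
Variable P : set R.
Local Notation C := R[i].
Local Notation cRe := (@complex.Re R).
Local Notation cIm := (@complex.Im R).
Implicit Types (F G : R -> C) (x y v w : R -> C) (a : C).

Definition csm F := sm P (fun l => cRe (F l)) /\ sm P (fun l => cIm (F l)).

Lemma Re_csum F : cRe (csum P F) = rsum P (fun l => cRe (F l)). Proof. by []. Qed.
Lemma Im_csum F : cIm (csum P F) = rsum P (fun l => cIm (F l)). Proof. by []. Qed.

Lemma csmD F G : csm F -> csm G -> csm (fun l => F l + G l).
Proof.
move=> [F1 F2] [G1 G2]; split.
  by apply: (sm_eq (g := fun l => cRe (F l) + cRe (G l))) => [l _|]; rewrite ?ReD // smD.
by apply: (sm_eq (g := fun l => cIm (F l) + cIm (G l))) => [l _|]; rewrite ?ImD // smD.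
Qed.

Lemma csmZ F a : csm F -> csm (fun l => a * F l).
Proof.
move=> [F1 F2]; split.
  apply: (sm_eq (g := fun l => cRe a * cRe (F l) - cIm a * cIm (F l))) => [l _|]; rewrite ?ReM //.
  by apply: smB; apply: smZ.
apply: (sm_eq (g := fun l => cRe a * cIm (F l) + cIm a * cRe (F l))) => [l _|]; rewrite ?ImM //.
by apply: smD; apply: smZ.
Qed.

Lemma csmN F : csm F -> csm (fun l => - F l).
Proof.
move=> H; have [H1 H2] := csmZ (-1) H.
by split; [apply: sm_eq H1|apply: sm_eq H2] => l _; rewrite mulN1r.
Qed.

Lemma csmB F G : csm F -> csm G -> csm (fun l => F l - G l).
Proof. by move=> H1 H2; apply: csmD => //; apply: csmN. Qed.

Lemma csum_eq F G : (forall l, P l -> F l = G l) -> csum P F = csum P G.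
Proof.
move=> H; apply: cE; rewrite ?Re_csum ?Im_csum; apply: rsum_eq => l /H -> //.
Qed.

Lemma csumD F G : csm F -> csm G -> csum P (fun l => F l + G l) = csum P F + csum P G.
Proof.
move=> [F1 F2] [G1 G2]; apply: cE.
  rewrite ReD !Re_csum -rsumD //; apply: rsum_eq => l _; exact: ReD.
rewrite ImD !Im_csum -rsumD //; apply: rsum_eq => l _; exact: ImD.
Qed.

Lemma csumZ F a : csm F -> csum P (fun l => a * F l) = a * csum P F.
Proof.
move=> [F1 F2]; apply: cE.
  rewrite ReM !Re_csum Im_csum -!rsumZ // -rsumB; try by apply: smZ.
  by apply: rsum_eq => l _; rewrite ReM.
rewrite ImM !Re_csum Im_csum -!rsumZ // -rsumD; try by apply: smZ.
by apply: rsum_eq => l _; rewrite ImM.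
Qed.

Lemma csumN F : csm F -> csum P (fun l => - F l) = - csum P F.
Proof.
move=> H; rewrite -mulN1r -csumZ //; apply: csum_eq => l _; by rewrite mulN1r.
Qed.

Lemma csumB F G : csm F -> csm G -> csum P (fun l => F l - G l) = csum P F - csum P G.
Proof. by move=> H1 H2; rewrite csumD ?csumN //; apply: csmN. Qed.

Lemma csum1 F b : P b -> (forall l, l != b -> F l = 0) -> csum P F = F b.
Proof.
move=> Pb H; apply: cE; rewrite ?Re_csum ?Im_csum; rewrite (rsum1 (a := b)) //.
- by move=> l /H ->.
- by move=> l /H ->.
Qed.

Lemma csum0 : csum P (fun _ => 0) = 0.
Proof. by apply: cE; rewrite ?Re_csum ?Im_csum /= rsum0. Qed.

Lemma l2_fin x : l2 P x -> fin P (fun l => normc2 (x l)). Proof. by case. Qed.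
Lemma l2_van x : l2 P x -> forall l, ~ P l -> x l = 0. Proof. by case. Qed.
Lemma sqnormE x : sqnorm P x = SS P (fun l => normc2 (x l)). Proof. by []. Qed.
Lemma nn_nc2 x : nn P (fun l => normc2 (x l)). Proof. by move=> l _; exact: nc2_ge0. Qed.

Lemma sqnorm_ge0 x : 0 <= sqnorm P x. Proof. exact: SS_ge0 (nn_nc2 x). Qed.

Lemma l2_le x y c : 0 <= c -> (forall l, ~ P l -> x l = 0) ->
  (forall l, P l -> normc2 (x l) <= c * normc2 (y l)) -> l2 P y ->
  l2 P x /\ sqnorm P x <= c * sqnorm P y.
Proof.
move=> c0 Hv H Hy.
have F : fin P (fun l => c * normc2 (y l)) by apply: finZ => //; [apply: nn_nc2|apply: l2_fin].
split; first by split => //; exact: fin_le F.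
rewrite !sqnormE -SSZ //; [|apply: nn_nc2|apply: l2_fin] => //.
by apply: SS_le => //; exact: nn_nc2.
Qed.

Lemma l2_eq x y : (forall l, x l = y l) -> l2 P y -> l2 P x /\ sqnorm P x = sqnorm P y.
Proof.
move=> H Hy; have -> : x = y by apply: funext.
by [].
Qed.

Lemma l2D x y : l2 P x -> l2 P y -> l2 P (fun l => x l + y l) /\
   sqnorm P (fun l => x l + y l) <= 2 * (sqnorm P x + sqnorm P y).
Proof.
move=> Hx Hy.
have F : fin P (fun l => normc2 (x l) + normc2 (y l)) by apply: finD; [apply: nn_nc2|apply: nn_nc2|apply: l2_fin|apply: l2_fin].
have F2 : fin P (fun l => 2 * (normc2 (x l) + normc2 (y l))).
  by apply: finZ => //; move=> l _; rewrite addr_ge0 ?nc2_ge0.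
split.
  split; first by move=> l Pl; rewrite !l2_van // addr0.
  by apply: fin_le F2 => l _; exact: nc2D.
rewrite !sqnormE -SSD; [|apply: nn_nc2|apply: nn_nc2|apply: l2_fin|apply: l2_fin] => //.
rewrite -SSZ //; last by move=> l _; rewrite addr_ge0 ?nc2_ge0.
apply: SS_le => //; [apply: nn_nc2|move=> l _; exact: nc2D].
Qed.

Lemma l2Z x a : l2 P x -> l2 P (fun l => a * x l) /\ sqnorm P (fun l => a * x l) = normc2 a * sqnorm P x.
Proof.
move=> Hx.
have F : fin P (fun l => normc2 a * normc2 (x l)) by apply: finZ; [apply: nc2_ge0|apply: nn_nc2|apply: l2_fin].
split.
  split; first by move=> l Pl; rewrite l2_van // mulr0.
  by apply: fin_eq F => l _; rewrite nc2M.
rewrite !sqnormE -SSZ ?nc2_ge0 ?l2_fin //; last exact: nn_nc2.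
by apply: SS_eq => l _; rewrite nc2M.
Qed.

Lemma l2N x : l2 P x -> l2 P (fun l => - x l) /\ sqnorm P (fun l => - x l) = sqnorm P x.
Proof.
move=> Hx; split; first split.
- by move=> l /(l2_van Hx) ->; rewrite oppr0.
- by apply: fin_eq (l2_fin Hx) => l _; rewrite nc2N.
by rewrite !sqnormE; apply: SS_eq => l _; rewrite nc2N.
Qed.

Lemma l2B x y : l2 P x -> l2 P y -> l2 P (fun l => x l - y l) /\
   sqnorm P (fun l => x l - y l) <= 2 * (sqnorm P x + sqnorm P y).
Proof.
move=> Hx Hy; have [Ny Ey] := l2N Hy; have [A B] := l2D Hx Ny.
by split => //; rewrite -Ey.
Qed.

Lemma l2_0 : l2 P (fun _ => 0) /\ sqnorm P (fun _ => 0) = 0.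
Proof.
split; first split => //.
  by apply: fin_eq (fin0 P) => l _; rewrite nc2E expr0n /= addr0.
by rewrite sqnormE (@SS_eq _ _ _ (fun _ => 0)) ?SS0 // => l _; rewrite nc2E expr0n /= addr0.
Qed.

Lemma l2_1 x b : P b -> (forall l, l != b -> x l = 0) -> l2 P x /\ sqnorm P x = normc2 (x b).
Proof.
move=> Pb H.
have H' : forall l, l != b -> normc2 (x l) = 0 by move=> l /H ->; rewrite nc2E expr0n /= addr0.
split; first split.
- by move=> l Pl; apply: H; apply: contraPneq Pl => ->.
- by apply: (fin1 (a := b)) => //; exact: nc2_ge0.
by rewrite sqnormE (SS1 (a := b)) // nc2_ge0.
Qed.

Lemma l2_ge1 x b : P b -> l2 P x -> normc2 (x b) <= sqnorm P x.
Proof. by move=> Pb Hx; apply: (SS_ge1 (h := fun l => normc2 (x l))) => //; [apply: nn_nc2|apply: l2_fin]. Qed.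

Lemma sqnorm_eq0 x : l2 P x -> sqnorm P x = 0 -> forall l, x l = 0.
Proof.
move=> Hx H0 l; have [Pl|nPl] := pselect (P l); last exact: l2_van.
apply: nc2_eq0; apply/eqP; rewrite eq_le nc2_ge0 andbT -H0; exact: l2_ge1.
Qed.

Lemma csm_inner v x : l2 P v -> l2 P x -> csm (fun l => conjc (v l) * x l).
Proof.
move=> Hv Hx.
have F : fin P (fun l => (normc2 (v l) + normc2 (x l)) / 2).
  under [fun l => _]funext => l do rewrite mulrC.
  apply: finZ => //; first by move=> l _; rewrite addr_ge0 ?nc2_ge0.
  by apply: finD; [apply: nn_nc2|apply: nn_nc2|apply: l2_fin|apply: l2_fin].
split; apply: sm_le F => l _; rewrite -(nc2J (v l)).
  exact: absRe_le.
exact: absIm_le.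
Qed.

Lemma innerE v x : inner P v x = csum P (fun l => conjc (v l) * x l). Proof. by []. Qed.

Lemma inner_eq v x y : (forall l, P l -> x l = y l) -> inner P v x = inner P v y.
Proof. by move=> H; rewrite !innerE; apply: csum_eq => l /H ->. Qed.

Lemma innerD v x y : l2 P v -> l2 P x -> l2 P y ->
  inner P v (fun l => x l + y l) = inner P v x + inner P v y.
Proof.
move=> Hv Hx Hy; rewrite !innerE -csumD; try by apply: csm_inner.
by apply: csum_eq => l _; rewrite mulrDr.
Qed.

Lemma innerB v x y : l2 P v -> l2 P x -> l2 P y ->
  inner P v (fun l => x l - y l) = inner P v x - inner P v y.
Proof.
move=> Hv Hx Hy; rewrite !innerE -csumB; try by apply: csm_inner.
by apply: csum_eq => l _; rewrite mulrBr.
Qed.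

Lemma innerZ v x a : l2 P v -> l2 P x -> inner P v (fun l => a * x l) = a * inner P v x.
Proof.
move=> Hv Hx; rewrite !innerE -csumZ; last by apply: csm_inner.
by apply: csum_eq => l _; rewrite mulrCA.
Qed.

Lemma inner1 v x b : P b -> (forall l, l != b -> x l = 0) -> inner P v x = conjc (v b) * x b.
Proof. by move=> Pb H; rewrite innerE (csum1 (b := b)) // => l /H ->; rewrite mulr0. Qed.

Lemma inner0 v : inner P v (fun _ => 0) = 0.
Proof. by rewrite innerE (@csum_eq _ (fun _ => 0)) ?csum0 // => l _; rewrite mulr0. Qed.

End L4.
Section L5.
Variable R : realType.
Variable P : set R.
Local Notation C := R[i].
Local Notation cRe := (@complex.Re R).
Local Notation cIm := (@complex.Im R).

Lemma sm_nc2 (x : R -> C) : l2 P x -> sm P (fun l => normc2 (x l)).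
Proof. by move=> H; apply: sm_nn; [apply: nn_nc2|apply: l2_fin]. Qed.

Lemma rsum_nc2 (x : R -> C) : l2 P x -> rsum P (fun l => normc2 (x l)) = sqnorm P x.
Proof. by move=> H; rewrite rsum_nn //; [apply: nn_nc2|apply: l2_fin]. Qed.

Lemma inner_CS (v w : R -> C) : l2 P v -> l2 P w ->
  normc2 (inner P v w) <= sqnorm P v * sqnorm P w.
Proof.
move=> Hv Hw; set s := inner P v w.
have [V0|Vn0] := eqVneq (sqnorm P v) 0.
  have v0 := sqnorm_eq0 Hv V0.
  have -> : s = 0.
    by rewrite /s innerE (@csum_eq _ _ _ (fun _ => 0)) ?csum0 // => l _; rewrite v0 conjc0 mul0r.
  by rewrite V0 mul0r nc2E expr0n /= addr0.
have Vp : 0 < sqnorm P v by rewrite lt_def Vn0 sqnorm_ge0.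
set V := sqnorm P v; set W := sqnorm P w.
set e := V^-1.
have ep : 0 < e by rewrite invr_gt0.
have E1 : normc2 s = cRe (conjc s * s) by rewrite JM.
have E2 : conjc s * s = csum P (fun l => conjc s * (conjc (v l) * w l)).
  by rewrite csumZ //; apply: csm_inner.
have cs := csmZ (conjc s) (csm_inner Hv Hw).
have key : cRe (conjc s * s) <= rsum P (fun l =>
    (e * normc2 s / 2) * normc2 (v l) + (e^-1 / 2) * normc2 (w l)).
  rewrite E2 Re_csum; apply: rsum_le.
  - by case: cs.
  - by apply: smD; apply: smZ; apply: sm_nc2.
  move=> l _; rewrite mulrA.
  have := Re_le (conjc s * conjc (v l)) (w l) ep.
  rewrite nc2M nc2J nc2J => h; apply: (le_trans h); rewrite le_eqVlt; apply/orP; left; apply/eqP.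
  by ring.
have sv := sm_nc2 Hv; have sw := sm_nc2 Hw.
rewrite (rsumD (smZ _ sv) (smZ _ sw)) (rsumZ _ sv) (rsumZ _ sw) (rsum_nc2 Hv) (rsum_nc2 Hw) in key.
rewrite -E1 -/V -/W in key.
have E3 : e * normc2 s / 2 * V = normc2 s / 2.
  by rewrite /e [LHS]mulrC !mulrA mulfV ?mul1r // gt_eqF.
rewrite E3 /e invrK in key.
have VW : 0 <= V * W by rewrite mulr_ge0 // sqnorm_ge0.
lra.
Qed.

End L5.
Section L6.
Variable R : realType.
Variable P : set R.
Local Notation C := R[i].
Local Notation cRe := (@complex.Re R).
Local Notation cIm := (@complex.Im R).

Lemma nc20 : normc2 (0 : C) = 0.
Proof. by rewrite nc2E expr0n /= addr0. Qed.

Lemma resE (v : R -> C) (t : R) (z : C) (x : Ht R) :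
  hsub (ApB P v t x) (hscale z x) =
  (fun l => ((l%:C)%C - z) * x.1 l + x.2 * v l, inner P v x.1 + ((t%:C)%C - z) * x.2).
Proof.
rewrite /hsub /ApB /hadd /Aop /hscale /Bop /Kop /=; congr pair.
  by apply: funext => l; ring.
by ring.
Qed.

Lemma l2_2 (x : R -> C) a b : P a -> P b -> a != b ->
  (forall l, l != a -> l != b -> x l = 0) ->
  l2 P x /\ sqnorm P x = normc2 (x a) + normc2 (x b).
Proof.
move=> Pa Pb ab H.
pose xa := fun l => if l == a then x a else 0.
pose xb := fun l => if l == b then x b else 0.
have [la sa] : l2 P xa /\ sqnorm P xa = normc2 (xa a).
  by apply: (l2_1 (b := a)) => // l /negbTE; rewrite /xa => ->.
have [lb sb] : l2 P xb /\ sqnorm P xb = normc2 (xb b).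
  by apply: (l2_1 (b := b)) => // l /negbTE; rewrite /xb => ->.
have E : forall l, x l = xa l + xb l.
  move=> l; rewrite /xa /xb; have [->|la'] := eqVneq l a.
    by rewrite (negbTE ab) addr0.
  have [->|lb'] := eqVneq l b; first by rewrite add0r.
  by rewrite H // addr0.
have [Hx _] := l2D la lb.
have [Hx' _] := l2_eq E Hx.
split => //.
rewrite !sqnormE (@SS_eq _ _ _ (fun l => normc2 (xa l) + normc2 (xb l))); last first.
  move=> l Pl; rewrite E; have [->|la'] := eqVneq l a.
    by rewrite /xa /xb eqxx (negbTE ab) addr0 nc20 addr0.
  by rewrite /xa (negbTE la') add0r nc20 add0r.
rewrite SSD; [|apply: nn_nc2|apply: nn_nc2|apply: l2_fin la|apply: l2_fin lb].
rewrite -!sqnormE sa sb /xa /xb !eqxx; by [].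
Qed.

Lemma inner2 (v x : R -> C) a b : P a -> P b -> a != b -> l2 P v ->
  (forall l, l != a -> l != b -> x l = 0) ->
  inner P v x = conjc (v a) * x a + conjc (v b) * x b.
Proof.
move=> Pa Pb ab Hv H.
pose xa := fun l => if l == a then x a else 0.
pose xb := fun l => if l == b then x b else 0.
have [la _] : l2 P xa /\ sqnorm P xa = normc2 (xa a).
  by apply: (l2_1 (b := a)) => // l /negbTE; rewrite /xa => ->.
have [lb _] : l2 P xb /\ sqnorm P xb = normc2 (xb b).
  by apply: (l2_1 (b := b)) => // l /negbTE; rewrite /xb => ->.
have E : forall l, P l -> x l = xa l + xb l.
  move=> l _; rewrite /xa /xb; have [->|la'] := eqVneq l a.
    by rewrite (negbTE ab) addr0.
  have [->|lb'] := eqVneq l b; first by rewrite add0r.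
  by rewrite H // addr0.
rewrite (inner_eq _ E) innerD // (@inner1 _ _ v xa a Pa) ?(@inner1 _ _ v xb b Pb) /xa /xb ?eqxx //.
- by move=> l /negbTE; rewrite /xb => ->.
- by move=> l /negbTE; rewrite /xa => ->.
Qed.

Lemma l2_Kop (v x y : R -> C) (z alpha : C) : l2 P v -> l2 P x -> l2 P y ->
  (forall l, ((l%:C)%C - z) * x l + alpha * v l = y l) -> l2 P (Kop x).
Proof.
move=> Hv Hx Hy H.
have E : forall l, Kop x l = z * x l + (y l - alpha * v l).
  by move=> l; rewrite /Kop -H; ring.
have [A _] := l2Z z Hx.
have [B _] := l2Z alpha Hv.
have [D _] := l2B Hy B.
have [F _] := l2D A D.
by have [] := l2_eq E F.
Qed.

Lemma dom0 : domA P ((fun _ => 0), 0).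
Proof.
split; first by case: (l2_0 P).
have [A _] := l2_0 P.
by have [] := l2_eq (x := Kop (fun _ => 0)) (fun l => mulr0 _) A.
Qed.

Lemma spec_eig (v : R -> C) (t : R) (z : C) (x0 : Ht R) : l2 P v ->
  domA P x0 -> x0.2 != 0 -> hsub (ApB P v t x0) (hscale z x0) = ((fun _ => 0), 0) ->
  spectrum P (domA P) (ApB P v t) z.
Proof.
move=> Hv D0 n0 E0 [M HM].
have [x [_ _ _ U]] := HM ((fun _ => 0), 0) (proj1 (l2_0 P)).
have e1 := U _ D0 E0.
have e2 : ((fun _ : R => 0 : C), 0 : C) = x.
  apply: U; first exact: dom0.
  rewrite resE /=; congr pair; first by apply: funext => l; rewrite mulr0 mul0r addr0.
  by rewrite inner0 mulr0 addr0.
by move: n0; rewrite e1 -e2 eqxx.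
Qed.

Lemma spec_approx (v : R -> C) (t : R) (z : C) :
  (forall M : R, exists x0, [/\ domA P x0, Hspace P (hsub (ApB P v t x0) (hscale z x0)) &
     M * hnorm2 P (hsub (ApB P v t x0) (hscale z x0)) < hnorm2 P x0]) ->
  spectrum P (domA P) (ApB P v t) z.
Proof.
move=> H [M HM]; have [x0 [D0 Hy Hlt]] := H M.
have [x [_ _ B U]] := HM _ Hy.
have e := U _ D0 erefl.
move: B; rewrite -e => B; by rewrite ltNge B in Hlt.
Qed.

End L6.
Section L7.
Variable R : realType.
Variable P : set R.
Local Notation C := R[i].

Lemma l2_sum (v : R -> C) : (forall n : nat, l2 P (fun l => (l%:C)%C ^+ n * v l)) ->
  forall N (c : nat -> C), l2 P (fun l => \sum_(n < N) c n * ((l%:C)%C ^+ n * v l)).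
Proof.
move=> H; elim=> [|N IH] c.
  have [A _] := l2_0 P.
  by apply: (proj1 (l2_eq _ A)) => l; rewrite big_ord0.
have [A _] := l2Z (c N) (H N).
have [B _] := l2D (IH c) A.
by apply: (proj1 (l2_eq _ B)) => l; rewrite big_ord_recr.
Qed.

Lemma nc21 : normc2 (1 : C) = 1.
Proof. by rewrite nc2E /= expr1n expr0n /= addr0. Qed.

Lemma v_nz (v : R -> C) : cyclic_vec P v -> forall c, P c -> v c != 0.
Proof.
move=> [H1 H2] c Pc; apply/negP => /eqP v0.
pose x := fun l => if l == c then (1 : C) else 0.
have [Hx _] : l2 P x /\ sqnorm P x = normc2 (x c).
  by apply: (l2_1 (b := c)) => // l /negbTE; rewrite /x => ->.
have h2 : (0 : R) < 1 / 2 by [].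
have [N [cs Hd]] := H2 x Hx _ h2.
have [Hdl _] := l2B Hx (l2_sum H1 N cs).
have := l2_ge1 Pc Hdl.
rewrite /x eqxx big1 ?subr0 ?nc21; last by move=> i _; rewrite v0 !mulr0.
move=> h; have := lt_le_trans (le_lt_trans h Hd) (lexx _); lra.
Qed.

End L7.
Section L8.
Variable R : realType.
Variable P : set R.
Local Notation C := R[i].
Local Notation cRe := (@complex.Re R).
Local Notation cIm := (@complex.Im R).

Lemma RCB (a b : R) : ((a%:C)%C - (b%:C)%C : C) = ((a - b)%:C)%C.
Proof. by apply: cE; rewrite !cRw ?oppr0 ?addr0. Qed.

Lemma RC_neq0 (r : R) : r != 0 -> ((r%:C)%C : C) != 0.
Proof.
move=> h; apply/eqP => H; move: h.
have : cRe ((r%:C)%C) = cRe 0 by rewrite H.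
by rewrite ReR Re0 => ->; rewrite eqxx.
Qed.

Lemma nc2_neq0 (a : C) : a != 0 -> 0 < normc2 a.
Proof.
move=> h; rewrite lt_def nc2_ge0 andbT; apply/eqP => /nc2_eq0 H.
by rewrite H eqxx in h.
Qed.

Lemma inv_le (a b : R) : 0 < a -> a <= b -> b^-1 <= a^-1.
Proof.
move=> a0 ab; have b0 : 0 < b by apply: lt_le_trans ab.
by rewrite lef_pV2 ?posrE.
Qed.

Lemma conj_neq0 (a : C) : a != 0 -> conjc a != 0.
Proof.
move=> h; apply/eqP => H; have := nc2_neq0 h; rewrite -nc2J H nc20 ltxx //.
Qed.

Lemma nc2_div (a b : C) : normc2 (a / b) = normc2 a / normc2 b.
Proof. by rewrite nc2M nc2V. Qed.

Lemma resolv_P (v : R -> C) (t c : R) : l2 P v -> discrete_set P -> P c -> v c != 0 ->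
  exists M : R, forall y, Hspace P y ->
    exists x, [/\ domA P x, hsub (ApB P v t x) (hscale (c%:C)%C x) = y,
      hnorm2 P x <= M * hnorm2 P y &
      forall x', domA P x' -> hsub (ApB P v t x') (hscale (c%:C)%C x') = y -> x' = x].
Proof.
move=> Hv Hd Pc vc0.
have [e e0 He] := Hd c Pc.
set vc := v c.
set Ev := normc2 vc.
have Ev0 : 0 < Ev by apply: nc2_neq0.
set V := sqnorm P v.
have V0 : 0 <= V by apply: sqnorm_ge0.
set Tc := normc2 (((t%:C)%C - (c%:C)%C) : C).
have Tc0 : 0 <= Tc by apply: nc2_ge0.
set E := (e ^+ 2)^-1.
have E0 : 0 <= E by rewrite invr_ge0 sqr_ge0.
set a1 := Ev^-1.
have a10 : 0 <= a1 by rewrite invr_ge0 ltW.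
set bK := 2 * (1 + a1 * V).
set gK := E * bK.
have gK0 : 0 <= gK by rewrite /gK /bK; apply: mulr_ge0 => //; nra.
set cK := (4 + 4 * Tc * a1 + 2 * V * gK) * a1.
have cK0 : 0 <= cK by rewrite /cK; apply: mulr_ge0 => //; nra.
exists (2 * gK + 2 * cK + a1) => -[y1 y2] Hy.
rewrite /Hspace /= in Hy.
set n1 := sqnorm P y1; set n2 := normc2 y2.
have n10 : 0 <= n1 by apply: sqnorm_ge0.
have n20 : 0 <= n2 by apply: nc2_ge0.
pose m := fun l : R => (((l - c)%:C)%C : C)^-1.
have mB : forall l, P l -> normc2 (m l) <= E.
  move=> l Pl; rewrite /m nc2V nc2R.
  have [->|lc] := eqVneq l c; first by rewrite subrr expr0n /= invr0.
  have h : e <= `|l - c|.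
    by rewrite leNgt; apply/negP => h; move: lc; rewrite (He l Pl h) eqxx.
  apply: inv_le; first by rewrite exprn_gt0.
  rewrite -(real_normK (num_real (l - c))).
  have := normr_ge0 (l - c); nra.
pose alpha := y1 c / vc.
pose w := fun l => y1 l - alpha * v l.
have [Hw Hwn] : l2 P w /\ sqnorm P w <= 2 * (n1 + normc2 alpha * V).
  have [A A'] := l2Z alpha Hv.
  have [B B'] := l2B Hy A.
  by split => //; rewrite -A'.
pose g := fun l => m l * w l.
have [Hg Hgn] : l2 P g /\ sqnorm P g <= E * sqnorm P w.
  apply: l2_le => //.
    by move=> l nPl; rewrite /g /w (l2_van Hy) // (l2_van Hv) // mulr0 subr0 mulr0.
  move=> l Pl; rewrite /g nc2M; apply: ler_wpM2r; [exact: nc2_ge0|exact: mB].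
pose gam := (y2 - ((t%:C)%C - (c%:C)%C) * alpha - inner P v g) / conjc vc.
pose ec := fun l : R => if l == c then (1 : C) else 0.
have [Hec Hecn] : l2 P ec /\ sqnorm P ec = normc2 (ec c).
  by apply: (l2_1 (b := c)) => // l /negbTE; rewrite /ec => ->.
rewrite /ec eqxx nc21 in Hecn.
pose x1 := fun l => g l + gam * ec l.
have [Hgec Hgecn] := l2Z gam Hec.
have [Hx1 Hx1n] := l2D Hg Hgec.
rewrite -/x1 Hgecn Hecn mulr1 in Hx1n.
have E1 : forall l, ((l%:C)%C - (c%:C)%C) * x1 l + alpha * v l = y1 l.
  move=> l; rewrite RCB; have [->|lc] := eqVneq l c.
    by rewrite subrr mul0r add0r /alpha -/vc divfK.
  rewrite /x1 /ec (negbTE lc) mulr0 addr0 /g /m /w mulrA mulfV ?mul1r ?subrK //.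
  by apply: RC_neq0; rewrite subr_eq0.
have Ig : inner P v x1 = inner P v g + gam * conjc vc.
  rewrite /x1 innerD // innerZ // (@inner1 _ _ v ec c Pc); last first.
    by move=> l /negbTE; rewrite /ec => ->.
  by rewrite /ec eqxx mulr1 mulrC.
have cvc0 : conjc vc != 0 by apply: conj_neq0.
have E2 : inner P v x1 + ((t%:C)%C - (c%:C)%C) * alpha = y2.
  rewrite Ig /gam divfK //; ring.
have KD : domA P (x1, alpha).
  split => //=; exact: l2_Kop Hv Hx1 Hy E1.
exists (x1, alpha); split => //.
- rewrite resE /=; congr pair => //; exact: funext.
- rewrite /hnorm2 /= -/n1 -/n2.
  have ha : normc2 alpha <= a1 * n1.
    rewrite /alpha nc2_div -/vc -/Ev mulrC; apply: ler_wpM2l => //.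
    exact: l2_ge1.
  have hw : sqnorm P w <= bK * n1 by rewrite /bK; nra.
  have hg : sqnorm P g <= gK * n1 by rewrite /gK; nra.
  have hig : normc2 (inner P v g) <= V * (gK * n1).
    apply: le_trans (inner_CS Hv Hg) _; exact: ler_wpM2l.
  have hgam : normc2 gam <= cK * (n1 + n2).
    rewrite /gam nc2_div nc2J -/Ev /cK.
    set A := y2 - _ * alpha.
    have hA : normc2 A <= 2 * (n2 + Tc * normc2 alpha).
      by have := nc2B y2 (((t%:C)%C - (c%:C)%C) * alpha); rewrite nc2M.
    have hB := nc2B A (inner P v g).
    rewrite -/a1.
    have hT := ler_wpM2l Tc0 ha.
    have p1 : 0 <= Tc * a1 * n2 by rewrite mulr_ge0 // mulr_ge0.
    have p2 : 0 <= V * gK * n2 by rewrite mulr_ge0 // mulr_ge0.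
    have h : normc2 (A - inner P v g) <= (4 + 4 * Tc * a1 + 2 * V * gK) * (n1 + n2).
      have -> : (4 + 4 * Tc * a1 + 2 * V * gK) * (n1 + n2) =
        4 * n1 + 4 * n2 + 4 * (Tc * (a1 * n1)) + 4 * (Tc * a1 * n2) + 2 * (V * (gK * n1)) + 2 * (V * gK * n2) by ring.
      lra.
    nra.
  nra.
- move=> [x1' alpha'] [/= Hx1' _]; rewrite resE /= => -[E1' E2'].
  have E1'' := fun l => congr1 (fun f => f l) E1'; simpl in E1''.
  pose d := fun l => x1 l - x1' l.
  have Hd0 : forall l, ((l%:C)%C - (c%:C)%C) * d l + (alpha - alpha') * v l = 0.
    move=> l; rewrite -(subrr (y1 l)) -{1}(E1 l) -(E1'' l) /d; ring.
  have ba : alpha - alpha' = 0.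
    have := Hd0 c; rewrite subrr mul0r add0r => /eqP; rewrite mulf_eq0 (negbTE vc0) orbF.
    by move/eqP.
  have dl : forall l, l != c -> d l = 0.
    move=> l lc; have lc' : ((l - c)%:C)%C != 0 :> C by apply: RC_neq0; rewrite subr_eq0.
    have := Hd0 l; rewrite ba mul0r addr0 RCB => /eqP.
    by rewrite mulf_eq0 (negbTE lc') /= => /eqP.
  have aa : alpha' = alpha by apply/eqP; rewrite eq_sym -subr_eq0 ba.
  have Id : inner P v d = 0.
    rewrite /d innerB //; rewrite aa in E2'; apply/eqP; rewrite subr_eq0; apply/eqP.
    by have := E2; rewrite -E2' => /addIr.
  rewrite (@inner1 _ _ v d c Pc dl) in Id.
  move: Id => /eqP; rewrite mulf_eq0 (negbTE cvc0) /= => /eqP dc.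
  have dall : forall l, x1' l = x1 l.
    move=> l; have : d l = 0 by have [->|lc] := eqVneq l c; [exact: dc|exact: dl].
    by rewrite /d => /eqP; rewrite subr_eq0 => /eqP ->.
  rewrite aa.
  by congr pair; apply: funext.
Qed.

End L8.
Section L9.
Variable R : realType.
Variable P : set R.
Local Notation C := R[i].
Local Notation cRe := (@complex.Re R).
Local Notation cIm := (@complex.Im R).

Lemma resolv_nr (v : R -> C) (t : R) (z : C) : l2 P v -> cIm z != 0 ->
  exists M : R, forall y, Hspace P y ->
    exists x, [/\ domA P x, hsub (ApB P v t x) (hscale z x) = y,
      hnorm2 P x <= M * hnorm2 P y &
      forall x', domA P x' -> hsub (ApB P v t x') (hscale z x') = y -> x' = x].
Proof.
move=> Hv bn0.
set b := cIm z.
have b2 : 0 < b ^+ 2 by rewrite exprn_even_gt0.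
set B := (b ^+ 2)^-1.
have B0 : 0 <= B by rewrite invr_ge0 ltW.
set V := sqnorm P v.
have V0 : 0 <= V by apply: sqnorm_ge0.
have nlz : forall l : R, b ^+ 2 <= normc2 ((l%:C)%C - z).
  move=> l; rewrite nc2E ImB ImR sub0r sqrrN -/b; have := sqr_ge0 (cRe ((l%:C)%C - z)); lra.
have lz0 : forall l : R, (l%:C)%C - z != 0.
  move=> l; apply/eqP => h; have := nlz l; rewrite h nc20; lra.
pose m := fun l : R => ((l%:C)%C - z)^-1.
have mB : forall l, normc2 (m l) <= B.
  by move=> l; rewrite /m nc2V; apply: inv_le.
have Imm : forall l, cIm (m l) = b / normc2 ((l%:C)%C - z).
  by move=> l; rewrite /m ImV -nc2E ImB ImR sub0r opprK -/b.
pose g := fun l => m l * v l.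
have [Hg Hgn] : l2 P g /\ sqnorm P g <= B * V.
  apply: l2_le => //; first by move=> l nPl; rewrite /g (l2_van Hv) // mulr0.
  by move=> l Pl; rewrite /g nc2M; apply: ler_wpM2r; [exact: nc2_ge0|exact: mB].
set ig := inner P v g.
set s := cIm ig.
have bs : 0 <= b * s.
  have [c1 c2] := csm_inner Hv Hg.
  rewrite /s /ig innerE Im_csum -rsumZ //.
  rewrite -(rsum0 P); apply: rsum_le.
  - by apply: sm_nn => //; exact: fin0.
  - exact: smZ.
  move=> l _; rewrite /g mulrCA JM ImM ReR ImR mulr0 add0r Imm.
  have := nc2_ge0 (v l); have := nlz l => h1 h2.
  have h3 : 0 <= b / normc2 ((l%:C)%C - z) * b.
    rewrite mulrAC -expr2 divr_ge0 //; first exact: sqr_ge0.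
    exact: le_trans (ltW b2) h1.
  by rewrite mulrA [b * _]mulrC mulr_ge0.
pose Dd := (t%:C)%C - z - ig.
have nD : b ^+ 2 <= normc2 Dd.
  rewrite nc2E /Dd ImB ImB ImR -/b -/s.
  have := sqr_ge0 (cRe ((t%:C)%C - z - ig)); nra.
have Dd0 : Dd != 0 by apply/eqP => h; move: nD; rewrite h nc20; lra.
exists (2 * B + (2 * B * V + 1) * (2 * B * (1 + V * B))) => -[y1 y2] Hy.
rewrite /Hspace /= in Hy.
set n1 := sqnorm P y1; set n2 := normc2 y2.
have n10 : 0 <= n1 by apply: sqnorm_ge0.
have n20 : 0 <= n2 by apply: nc2_ge0.
pose u := fun l => m l * y1 l.
have [Hu Hun] : l2 P u /\ sqnorm P u <= B * n1.
  apply: l2_le => //; first by move=> l nPl; rewrite /u (l2_van Hy) // mulr0.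
  by move=> l Pl; rewrite /u nc2M; apply: ler_wpM2r; [exact: nc2_ge0|exact: mB].
pose alpha := (y2 - inner P v u) / Dd.
pose x1 := fun l => u l - alpha * g l.
have [Hag Hagn] := l2Z alpha Hg.
have [Hx1 Hx1n] := l2B Hu Hag.
rewrite -/x1 Hagn in Hx1n.
have E1 : forall l, ((l%:C)%C - z) * x1 l + alpha * v l = y1 l.
  move=> l; rewrite /x1 /u /g (_ : m l * y1 l - alpha * (m l * v l) = m l * (y1 l - alpha * v l)); last by ring.
  by rewrite mulrA /m mulfV // mul1r subrK.
have E2 : inner P v x1 + ((t%:C)%C - z) * alpha = y2.
  rewrite /x1 innerB // innerZ // -/ig.
  have -> : inner P v u - alpha * ig + ((t%:C)%C - z) * alpha = inner P v u + alpha * Dd by rewrite /Dd; ring.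
  by rewrite /alpha divfK // addrC subrK.
have KD : domA P (x1, alpha).
  split => //=; exact: l2_Kop Hv Hx1 Hy E1.
exists (x1, alpha); split => //.
- rewrite resE /=; congr pair => //; exact: funext.
- rewrite /hnorm2 /= -/n1 -/n2.
  have hiu : normc2 (inner P v u) <= V * (B * n1).
    apply: le_trans (inner_CS Hv Hu) _; rewrite -/V; have := ler_wpM2l V0 Hun; lra.
  have hDi : (normc2 Dd)^-1 <= B by apply: inv_le.
  have ha : normc2 alpha <= 2 * (n2 + V * (B * n1)) * B.
    rewrite /alpha nc2_div.
    have h1 : normc2 (y2 - inner P v u) <= 2 * (n2 + V * (B * n1)).
      have := nc2B y2 (inner P v u); rewrite -/n2; lra.
    have X0 : 0 <= 2 * (n2 + V * (B * n1)).
      by apply: mulr_ge0 => //; apply: addr_ge0 => //; apply: mulr_ge0 => //; apply: mulr_ge0.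
    have i0 : 0 <= (normc2 Dd)^-1 by rewrite invr_ge0 nc2_ge0.
    have := ler_wpM2r i0 h1; have := ler_wpM2l X0 hDi; lra.
  have ha2 : normc2 alpha <= (2 * B * (1 + V * B)) * (n1 + n2).
    apply: le_trans ha _.
    have -> : 2 * (n2 + V * (B * n1)) * B = 2 * B * n2 + 2 * B * (V * B) * n1 by ring.
    have -> : (2 * B * (1 + V * B)) * (n1 + n2) =
      2 * B * n2 + 2 * B * (V * B) * n1 + (2 * B * n1 + 2 * B * (V * B) * n2) by ring.
    have : 0 <= 2 * B * n1 + 2 * B * (V * B) * n2.
      by apply: addr_ge0; apply: mulr_ge0 => //; apply: mulr_ge0 => //; apply: mulr_ge0.
    lra.
  set K := 2 * B * (1 + V * B) in ha2 *.
  have K0 : 0 <= K by rewrite /K; apply: mulr_ge0; [apply: mulr_ge0|]; nra.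
  have hx : sqnorm P x1 <= 2 * (B * n1 + B * V * normc2 alpha).
    apply: le_trans Hx1n _.
    have : normc2 alpha * sqnorm P g <= normc2 alpha * (B * V) by apply: ler_wpM2l => //; exact: nc2_ge0.
    lra.
  have hBV : B * V * normc2 alpha <= B * V * (K * (n1 + n2)).
    by apply: ler_wpM2l => //; apply: mulr_ge0.
  have -> : (2 * B + (2 * B * V + 1) * K) * (n1 + n2) =
    2 * B * n1 + 2 * B * n2 + 2 * (B * V * (K * (n1 + n2))) + K * (n1 + n2) by ring.
  have : 0 <= 2 * B * n2 by apply: mulr_ge0 => //; apply: mulr_ge0.
  lra.
- move=> [x1' alpha'] [/= Hx1' _]; rewrite resE /= => -[E1' E2'].
  have E1'' := fun l => congr1 (fun f => f l) E1'; simpl in E1''.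
  pose d := fun l => x1 l - x1' l.
  pose be := alpha - alpha'.
  have Hd0 : forall l, ((l%:C)%C - z) * d l = - be * v l.
    move=> l; apply/eqP; rewrite -subr_eq0; apply/eqP.
    rewrite -(subrr (y1 l)) -{1}(E1 l) -(E1'' l) /d /be; ring.
  have dg : forall l, d l = - be * g l.
    move=> l; rewrite -[d l]mul1r -(mulVf (lz0 l)) -mulrA Hd0 /g /m; ring.
  have Id : inner P v d = - be * ig.
    by rewrite (@inner_eq _ _ v d (fun l => - be * g l)) ?innerZ // => l _; exact: dg.
  have Id2 : inner P v d = inner P v x1 - inner P v x1' by rewrite /d innerB.
  have h1 : inner P v x1 = y2 - ((t%:C)%C - z) * alpha by rewrite -E2; ring.
  have h2 : inner P v x1' = y2 - ((t%:C)%C - z) * alpha' by rewrite -E2'; ring.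
  have bD : be * Dd = 0.
    have h3 : - be * ig = (y2 - ((t%:C)%C - z) * alpha) - (y2 - ((t%:C)%C - z) * alpha').
      by rewrite -Id Id2 h1 h2.
    transitivity (be * ((t%:C)%C - z) + (- be * ig)); first by rewrite /Dd; ring.
    by rewrite h3 /be; ring.
  have be0 : be = 0 by move/eqP: bD; rewrite mulf_eq0 (negbTE Dd0) orbF => /eqP.
  have aa : alpha' = alpha by apply/eqP; rewrite eq_sym -subr_eq0 -/be be0.
  have dall : forall l, x1' l = x1 l.
    move=> l; have := dg l; rewrite be0 oppr0 mul0r /d => /eqP.
    by rewrite subr_eq0 => /eqP ->.
  by rewrite aa; congr pair; apply: funext.
Qed.

End L9.
Section L10.
Variable R : realType.
Variable P : set R.
Local Notation C := R[i].
Local Notation cRe := (@complex.Re R).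
Local Notation cIm := (@complex.Im R).

Lemma sq_le (d x : R) : 0 <= d -> d <= `|x| -> d ^+ 2 <= x ^+ 2.
Proof.
move=> d0 h; rewrite -(real_normK (num_real x)); have := normr_ge0 x; nra.
Qed.

Lemma spec_iso (v : R -> C) (r d : R) : l2 P v -> ~ P r -> 0 < d ->
  (forall l, P l -> d <= `|l - r|) ->
  exists t : R, spectrum P (domA P) (ApB P v t) ((r%:C)%C).
Proof.
move=> Hv nPr d0 Hd.
pose m := fun l : R => (((l - r)%:C)%C : C)^-1.
have mB : forall l, P l -> normc2 (m l) <= (d ^+ 2)^-1.
  move=> l Pl; rewrite /m nc2V nc2R; apply: inv_le; first by rewrite exprn_gt0.
  exact: (sq_le (ltW d0) (Hd l Pl)).
pose x1 := fun l => m l * v l.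
have [Hx1 _] : l2 P x1 /\ sqnorm P x1 <= (d ^+ 2)^-1 * sqnorm P v.
  apply: l2_le => //; first by rewrite invr_ge0 sqr_ge0.
    by move=> l nPl; rewrite /x1 (l2_van Hv) // mulr0.
  move=> l Pl; rewrite /x1 nc2M; apply: ler_wpM2r; [exact: nc2_ge0|exact: mB].
set q := inner P v x1.
have Iq : cIm q = 0.
  rewrite /q innerE Im_csum (@rsum_eq _ _ _ (fun _ => 0)) ?rsum0 // => l _.
  rewrite /x1 mulrCA JM ImM ReR ImR mulr0 add0r /m ImV ImR oppr0 mul0r mul0r //.
have qE : q = ((cRe q)%:C)%C by apply: cE; rewrite ?ReR ?ImR.
exists (r + cRe q).
have E1 : forall l, ((l%:C)%C - (r%:C)%C) * x1 l + (-1) * v l = 0.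
  move=> l; rewrite RCB; have [->|lr] := eqVneq l r.
    by rewrite /x1 (l2_van Hv) // !mulr0 addr0.
  rewrite /x1 /m mulrA mulfV ?mul1r ?mulN1r ?subrr //.
  by apply: RC_neq0; rewrite subr_eq0.
have [H0 _] := l2_0 P.
apply: (@spec_eig _ _ v _ _ (x1, -1)) => //.
- split => //=; exact: (@l2_Kop _ _ v x1 (fun _ => 0) _ _ Hv Hx1 H0 E1).
- by rewrite /= oppr_eq0 oner_eq0.
rewrite resE /=; congr pair; first by apply: funext.
rewrite -/q RCB (_ : r + cRe q - r = cRe q); last by ring.
by rewrite {1}qE mulrN1 subrr.
Qed.

Lemma spec_acc (v : R -> C) (r : R) : l2 P v -> (forall c, P c -> v c != 0) -> ~ P r ->
  (forall rho : R, 0 < rho -> exists l, P l /\ `|l - r| < rho) ->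
  spectrum P (domA P) (ApB P v 0) ((r%:C)%C).
Proof.
move=> Hv vnz nPr acc; apply: spec_approx => M.
set k := `|M| + 1.
have k0 : 0 < k by rewrite /k ltr_pwDr.
set rho := k^-1.
have rho0 : 0 < rho by rewrite invr_gt0.
have rho1 : rho <= 1.
  by rewrite /rho invr_le1 ?unitf_gt0 //; rewrite /k; have := normr_ge0 M; lra.
have Mrho : `|M| * rho < 1.
  by rewrite /rho ltr_pdivrMr // mul1r /k; lra.
have [a [Pa ar]] := acc rho rho0.
have ar0 : 0 < `|a - r|.
  by rewrite normr_gt0 subr_eq0; apply/eqP => h; apply: nPr; rewrite -h.
have [b [Pb br]] := acc _ ar0.
have ab : a != b by apply/eqP => h; move: br; rewrite h ltxx.
pose p := conjc (v b); pose q := - conjc (v a).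
pose x1 := fun l => if l == a then p else if l == b then q else 0.
have x1a : x1 a = p by rewrite /x1 eqxx.
have x1b : x1 b = q by rewrite /x1 eq_sym (negbTE ab) eqxx.
have x1o : forall l, l != a -> l != b -> x1 l = 0.
  by move=> l /negbTE la /negbTE lb; rewrite /x1 la lb.
have [Hx1 Sx1] := l2_2 Pa Pb ab x1o.
pose y1 := fun l => ((l%:C)%C - (r%:C)%C) * x1 l + 0 * v l.
have y1o : forall l, l != a -> l != b -> y1 l = 0.
  by move=> l la lb; rewrite /y1 x1o // mulr0 mul0r addr0.
have [Hy1 Sy1] := l2_2 Pa Pb ab y1o.
have Iv : inner P v x1 = 0.
  rewrite (inner2 Pa Pb ab Hv x1o) x1a x1b /p /q; ring.
have Ey : hsub (ApB P v 0 (x1, 0)) (hscale (r%:C)%C (x1, 0)) = (y1, 0).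
  rewrite resE /=; congr pair; by rewrite Iv mulr0 addr0.
exists (x1, 0); rewrite Ey; split.
- split => //=; exact: (@l2_Kop _ _ v x1 y1 _ _ Hv Hx1 Hy1 (fun l => erefl)).
- exact: Hy1.
rewrite /hnorm2 /= Sx1 Sy1 x1a x1b /y1 x1a x1b !mul0r !addr0 nc20 !addr0 !nc2M !RCB !nc2R.
set S := normc2 p + normc2 q.
have Sp : 0 < S.
  rewrite /S /q nc2N nc2J; have := nc2_neq0 (vnz a Pa); have := nc2_ge0 p; lra.
have hp := nc2_ge0 p; have hq := nc2_ge0 q.
have ha : (a - r) ^+ 2 <= rho ^+ 2.
  rewrite -(real_normK (num_real (a - r))); apply: sq_le; first exact: normr_ge0.
  by rewrite (ger0_norm (ltW rho0)); exact: ltW ar.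
have hb : (b - r) ^+ 2 <= rho ^+ 2.
  rewrite -(real_normK (num_real (b - r))); apply: sq_le; first exact: normr_ge0.
  by rewrite (ger0_norm (ltW rho0)); exact: ltW (lt_trans br ar).
have hY : (a - r) ^+ 2 * normc2 p + (b - r) ^+ 2 * normc2 q <= rho ^+ 2 * S.
  rewrite /S; nra.
set Y := _ + _ in hY *.
have Y0 : 0 <= Y by rewrite /Y; apply: addr_ge0; apply: mulr_ge0 => //; apply: sqr_ge0.
have h1 : M * Y <= `|M| * Y by apply: ler_wpM2r => //; exact: ler_norm.
have h2 : `|M| * Y <= `|M| * (rho ^+ 2 * S) by apply: ler_wpM2l.
have h3 : `|M| * (rho ^+ 2 * S) = (`|M| * rho) * (rho * S) by rewrite expr2; ring.
have h4 : (`|M| * rho) * (rho * S) < rho * S.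
  have rS : 0 < rho * S by apply: mulr_gt0.
  have := normr_ge0 M; nra.
have h5 : rho * S <= S by have := ler_wpM2r (ltW Sp) rho1; rewrite mul1r.
lra.
Qed.

End L10.
Unset Implicit Arguments.

Theorem lemma2p10 (R : realType) (P : set R) (hcount : countable P)
  (hdisc : discrete_set P) (v : R -> R[i]) (hv : l2 P v)
  (hcyc : cyclic_vec P v) :
  \bigcup_(t in [set: R]) spectrum P (domA P) (ApB P v t) =
  [set z : R[i] | exists2 r : R, z = (r%:C)%C & ~ P r].
Proof.
have vnz := v_nz hcyc.
apply/seteqP; split.
- move=> z [t _ Hz] /=.
  have [b0|bn0] := eqVneq (complex.Im z) 0.
    have zE : z = ((complex.Re z)%:C)%C by apply: cE; rewrite ?ReR ?ImR.
    exists (complex.Re z) => // Pc.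
    apply: Hz; rewrite zE; exact: resolv_P hv hdisc Pc (vnz _ Pc).
  by exfalso; apply: Hz; exact: resolv_nr.
- move=> z [r -> nPr].
  have [[d d0 Hd]|nacc] := pselect (exists2 d : R, 0 < d & forall l, P l -> d <= `|l - r|).
    by have [t Ht] := spec_iso hv nPr d0 Hd; exists t.
  exists 0 => //; apply: spec_acc => // rho rho0.
  case: (pselect (exists l, P l /\ `|l - r| < rho)) => // hn; exfalso; apply: nacc.
  exists rho => // l Pl; rewrite leNgt; apply/negP => h; apply: hn; by exists l.
Qed.
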